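(* For any simple undirected graph $G$, the quantity $$\Lambda_1=\sum_{\{st,uv\}\in Q}\big(a_{su}(k_t+k_v)+a_{sv}(k_t+k_u)+a_{tu}(k_s+k_v)+a_{tv}(k_s+k_u)\big)$$ satisfies $$\Lambda_1=\sum_{st\in E}\Big((k_t-1)(\xi(s)-k_t)+(k_s-1)(\xi(t)-k_s)-2S_{s,t}\Big).$$
   Context: $a_{ij}$ adjacency entries, $k_x$ degree, $\Gamma(x)$ neighbourhood, $\xi(s)=\sum_{t\in\Gamma(s)}k_t$, $c(s,t)=\Gamma(s)\cap\Gamma(t)$, $S_{s,t}=\sum_{u\in c(s,t)}k_u$. $Q$ is the set of unordered pairs $\{st,uv\}$ of edges with $s,t,u,v$ pairwise distinct. *)

(* Defs.v *)
From mathcomp Require Import all_boot all_order all_algebra.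
Set Implicit Arguments. Unset Strict Implicit. Unset Printing Implicit Defensive.
Import GRing.Theory Num.Theory.
Local Open Scope ring_scope.

(* A simple undirected graph: vertex type T : finType, adjacency g : rel T,
   assumed symmetric and irreflexive (stated as hypotheses in the theorem). *)
Section Graph.
Variables (T : finType) (g : rel T).

Definition adj (x y : T) : int := (g x y : nat)%:Z.
Definition nbhd (x : T) : {set T} := [set y | g x y].
Definition deg (x : T) : int := (#|nbhd x|)%:Z.
Definition xi (s : T) : int := \sum_(t in nbhd s) deg t.
Definition common (s t : T) : {set T} := nbhd s :&: nbhd t.
Definition Sst (s t : T) : int := \sum_(u in common s t) deg u.

Definition edges : {set {set T}} :=
  [set e : {set T} | [exists s, exists t, g s t && (e == [set s; t])]].

Definition Qset : {set {set {set T}}} :=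
  [set P : {set {set T}} | [exists e1, exists e2,
     [&& e1 \in edges, e2 \in edges, [disjoint e1 & e2] & P == [set e1; e2]]]].

(* For e1 = {s,t}, e2 = {u,v}:
   a_su(k_t+k_v)+a_sv(k_t+k_u)+a_tu(k_s+k_v)+a_tv(k_s+k_u)
   = sum_{x in e1} sum_{y in e2} a_xy (k_{e1\x} + k_{e2\y}). *)
Definition term (e1 e2 : {set T}) : int :=
  \sum_(x in e1) \sum_(y in e2)
     adj x y * (\sum_(z in e1 :\ x) deg z + \sum_(w in e2 :\ y) deg w).

(* The summand for an element P = {e1,e2} of Q; the (symmetric) term is
   evaluated once, with the labelling fixed by the enumeration order. *)
Definition Qterm (P : {set {set T}}) : int :=
  \sum_(e1 in P) \sum_(e2 in P | (enum_rank e1 < enum_rank e2)%N) term e1 e2.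

Definition Lambda1 : int := \sum_(P in Qset) Qterm P.

Definition edge_term (s t : T) : int :=
  (deg t - 1) * (xi s - deg t) + (deg s - 1) * (xi t - deg s) - 2 * Sst s t.

(* sum over edges st in E: each unordered edge {s,t} counted once via
   the ordered representative with enum_rank s < enum_rank t *)
Definition Lambda1_rhs : int :=
  \sum_(p : T * T | g p.1 p.2 && (enum_rank p.1 < enum_rank p.2)%N)
     edge_term p.1 p.2.
End Graph.

(* Main.v *)
Require Import Defs.
From mathcomp Require Import all_boot all_order all_algebra.
From mathcomp Require Import ring lra zify.
Import GRing.Theory Num.Theory.
Local Open Scope ring_scope.


Definition swp (X : Type) (p : X * X) : X * X := (p.2, p.1).
Lemma swp_inj (X : Type) : injective (@swp X).
Proof. by move=> [a b] [c d] /= [-> ->]. Qed.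

Lemma halve (X : finType) (R : rel X) (h : X -> X -> int) :
  symmetric R -> irreflexive R -> (forall x y, h x y = h y x) ->
  \sum_(p : X * X | R p.1 p.2) h p.1 p.2 =
  2 * \sum_(p : X * X | R p.1 p.2 && (enum_rank p.1 < enum_rank p.2)%N) h p.1 p.2.
Proof.
move=> Rs Ri hs.
rewrite (bigID (fun p : X * X => (enum_rank p.1 < enum_rank p.2)%N)) /= mulr_natl mulr2n.
congr (_ + _).
rewrite (reindex_inj (@swp_inj X)) /=.
apply: eq_big => [[a b]|[a b]] /=; last by move=> _; rewrite hs.
rewrite Rs; case Rab: (R a b) => //=.
rewrite -leqNgt leq_eqVlt; case: eqP => //= H.
have eab : a = b by apply: enum_rank_inj; apply: val_inj.
by move: Rab; rewrite eab Ri.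
Qed.


Definition b2z (b : bool) : int := (b : nat)%:Z.
Lemma b2zE b : b2z b = if b then 1 else 0. Proof. by case: b. Qed.

Definition Dz {T : finType} (g : rel T) (s t u v : T) : int :=
  b2z [&& g s t, g u v, s != u, s != v, t != u & t != v].

Definition fsu {T : finType} (g : rel T) (s u : T) : int :=
  (deg g u - 1) * (xi g s - deg g u) - Sst g s u.

Lemma core (T : finType) (g : rel T) (gsym : symmetric g) (girr : irreflexive g)
  (s u : T) : g s u ->
  \sum_t \sum_v Dz g s t u v * adj g s u * deg g t = fsu g s u.
Proof.
move=> gsu.
have su : s != u by apply/eqP => E; move: gsu; rewrite E girr.
have gus : g u s by rewrite gsym.
have -> : adj g s u = 1 by rewrite /adj gsu.
transitivity (\sum_t \sum_v Dz g s t u v * deg g t).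
  by apply: eq_bigr => t _; apply: eq_bigr => v _; rewrite mulr1.
have step : forall t, \sum_v Dz g s t u v * deg g t =
   b2z (g s t && (t != u)) * deg g t * (deg g u - 1 - adj g u t).
  move=> t.
  case: (boolP (g s t && (t != u))) => [/andP[gst tu]|H]; last first.
    rewrite b2zE mul0r; apply: big1 => v _.
    rewrite /Dz b2zE; case: (g s t) H => //=; case: (t != u) => //=;
      by rewrite !andbF mul0r.
  have ts : t != s by apply/eqP => E; move: gst; rewrite E girr.
  rewrite b2zE mul1r.
  transitivity (\sum_(v in nbhd g u :\ s :\ t) deg g t).
    rewrite [RHS]big_mkcond /=; apply: eq_bigr => v _.
    rewrite /Dz b2zE gst su tu !in_setD1 /nbhd inE /=.
    rewrite (eq_sym s) (eq_sym t); by case: (g u v); case: (v != s); case: (v != t); rewrite /= ?mul1r ?mul0r.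
  rewrite sumr_const -mulr_natr natz; congr (_ * _).
  rewrite /deg (cardsD1 s (nbhd g u)) (cardsD1 t (nbhd g u :\ s)).
  rewrite !in_setD1 /nbhd !inE gus ts /adj /=.
  rewrite !PoszD; ring.
rewrite (eq_bigr _ (fun t _ => step t)).
transitivity ((deg g u - 1) * (\sum_t b2z (g s t && (t != u)) * deg g t)
   - \sum_t b2z (g s t && (t != u)) * deg g t * adj g u t).
  by rewrite mulr_sumr -sumrB; apply: eq_bigr => t _; ring.
have h1 : \sum_t b2z (g s t && (t != u)) * deg g t = xi g s - deg g u.
  rewrite /xi [\sum_(t in nbhd g s) _](bigD1 u) /=; last by rewrite /nbhd inE.
  rewrite addrC addrK [RHS]big_mkcond /=; apply: eq_bigr => t _.
  by rewrite /nbhd inE b2zE; case: (g s t && (t != u)); rewrite ?mul1r ?mul0r.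
have h2 : \sum_t b2z (g s t && (t != u)) * deg g t * adj g u t = Sst g s u.
  rewrite /Sst /common [RHS]big_mkcond /=; apply: eq_bigr => t _.
  rewrite !inE b2zE /adj.
  case: (eqVneq t u) => [->|tu]; first by rewrite girr !andbF /= mul0r.
  by case: (g s t); case: (g u t); rewrite /= ?mul1r ?mul0r ?mulr0 ?mulr1.
by rewrite h1 h2.
Qed.

Definition Zs {T : finType} (g : rel T) : int :=
  \sum_s \sum_t \sum_u \sum_v Dz g s t u v * adj g s u * deg g t.

Lemma cancel2 (x y : int) : 2 * x = 2 * y -> x = y.
Proof. by move=> H; apply: (mulfI (_ : 2 != 0)) => //. Qed.

Lemma rhs_Z (T : finType) (g : rel T) (gsym : symmetric g) (girr : irreflexive g) :
  Lambda1_rhs g = Zs g.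
Proof.
have E1 : Zs g = \sum_(p : T * T | g p.1 p.2) fsu g p.1 p.2.
  transitivity (\sum_s \sum_(u | g s u) fsu g s u); last by rewrite pair_big_dep.
  apply: eq_bigr => s _; rewrite exchange_big [RHS]big_mkcond; apply: eq_bigr => u _.
  case: ifP => gsu; first exact: core.
  by apply: big1 => t _; apply: big1 => v _; rewrite /adj gsu mulr0 mul0r.
apply: cancel2; rewrite /Lambda1_rhs -halve //; last first.
  by move=> x y; rewrite /edge_term /Sst /common setIC; ring.
rewrite E1 mulr_natl mulr2n.
transitivity (\sum_(p : T * T | g p.1 p.2) fsu g p.1 p.2 + \sum_(p : T * T | g p.1 p.2) fsu g p.2 p.1).
  rewrite -big_split /=; apply: eq_bigr => p _.
  by rewrite /edge_term /fsu /Sst /common setIC; ring.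
congr (_ + _).
rewrite (reindex_inj (@swp_inj T)) /=.
by apply: eq_bigl => p; rewrite gsym.
Qed.

Definition Rq {T : finType} (g : rel T) (e1 e2 : {set T}) : bool :=
  [&& e1 \in edges g, e2 \in edges g & [disjoint e1 & e2]].

Lemma L1 (T : finType) (g : rel T) :
  Lambda1 g = \sum_(q : {set T} * {set T} | Rq g q.1 q.2 && (enum_rank q.1 < enum_rank q.2)%N)
                 term g q.1 q.2.
Proof.
rewrite (partition_big (fun q : {set T} * {set T} => [set q.1; q.2]) (fun P => P \in Qset g)) /=; last first.
  move=> [a b] /= /andP[/and3P[ea eb dab] _].
  rewrite inE; apply/existsP; exists a; apply/existsP; exists b.
  by rewrite ea eb dab eqxx.
apply: eq_bigr => P HP.
rewrite /Qterm pair_big_dep /=; apply: eq_bigl => [[a b]] /=.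
move: HP; rewrite inE => /existsP[f1 /existsP[f2 /and4P[ef1 ef2 d12 /eqP->]]].
have f12 : f1 != f2.
  apply/eqP => E; move: ef2 d12; rewrite -E inE => /existsP[x /existsP[y /andP[_ /eqP->]]].
  by rewrite -setI_eq0 setIid => /eqP/setP/(_ x); rewrite !inE eqxx.
apply/idP/idP.
  case/andP => /set2P[]-> /andP[/set2P[]-> lt].
  - by rewrite ltnn in lt.
  - by rewrite /Rq ef1 ef2 d12 lt eqxx.
  - by rewrite /Rq ef1 ef2 disjoint_sym d12 lt /= setUC.
  - by rewrite ltnn in lt.
case/andP => /andP[_ lt] /eqP E.
by rewrite -E set21 set22 lt.
Qed.

Lemma edge_ne0 (T : finType) (g : rel T) e : e \in edges g -> ~~ [disjoint e & e].
Proof.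
rewrite inE => /existsP[x /existsP[y /andP[_ /eqP->]]].
by rewrite -setI_eq0 setIid; apply/negP => /eqP/setP/(_ x); rewrite !inE eqxx.
Qed.

Lemma term_sym (T : finType) (g : rel T) (gsym : symmetric g) e1 e2 :
  term g e1 e2 = term g e2 e1.
Proof.
rewrite /term exchange_big; apply: eq_bigr => y _; apply: eq_bigr => x _.
by rewrite /adj gsym addrC.
Qed.

Lemma L2 (T : finType) (g : rel T) (gsym : symmetric g) :
  2 * Lambda1 g = \sum_(e1 in edges g) \sum_(e2 in edges g | [disjoint e1 & e2]) term g e1 e2.
Proof.
rewrite L1 -halve.
- by rewrite [RHS]pair_big_dep.
- by move=> a b; rewrite /Rq andbCA disjoint_sym.
- by move=> a; rewrite /Rq; case ea: (a \in edges g) => //=; rewrite (negbTE (@edge_ne0 _ _ _ ea)).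
- by move=> a b; rewrite term_sym.
Qed.

Lemma dbl (T : finType) (g : rel T) (gsym : symmetric g) (girr : irreflexive g)
  (F : {set T} -> int) :
  2 * \sum_(e in edges g) F e = \sum_(p : T * T | g p.1 p.2) F [set p.1; p.2].
Proof.
rewrite (partition_big (fun p : T * T => [set p.1; p.2]) (fun e => e \in edges g)) /=; last first.
  move=> [a b] /= gab; rewrite inE; apply/existsP; exists a; apply/existsP; exists b.
  by rewrite gab eqxx.
rewrite mulr_sumr; apply: eq_bigr => e.
rewrite inE => /existsP[a /existsP[b /andP[gab /eqP Ee]]].
have ab : a != b by apply/eqP => E; move: gab; rewrite E girr.
transitivity (\sum_(p in pred2 (a, b) (b, a)) F e).
  by rewrite sumr_const card2 xpair_eqE (negbTE ab) /= mulr_natl.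
symmetry; apply: eq_big => [[x y]|[x y]] /=; last by move=> /andP[_ /eqP->].
rewrite !inE !xpair_eqE Ee.
apply/idP/idP.
  case/andP => gxy /eqP E.
  have xy : x != y by apply/eqP => E'; move: gxy; rewrite E' girr.
  have Hx : x \in [set a; b] by rewrite -E set21.
  have Hy : y \in [set a; b] by rewrite -E set22.
  move: xy; case/set2P: Hx => ->; case/set2P: Hy => ->; rewrite ?eqxx //= ?andbT ?orbT //.
case/orP => /andP[/eqP-> /eqP->]; first by rewrite gab eqxx.
by rewrite gsym gab setUC eqxx.
Qed.

Definition S4 {T : finType} (F : T -> T -> T -> T -> int) : int :=
  \sum_s \sum_t \sum_u \sum_v F s t u v.

Lemma S4_ext (T : finType) (F G : T -> T -> T -> T -> int) :
  (forall s t u v, F s t u v = G s t u v) -> S4 F = S4 G.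
Proof.
move=> H; apply: eq_bigr => s _; apply: eq_bigr => t _; apply: eq_bigr => u _.
by apply: eq_bigr => v _.
Qed.

Lemma S4D (T : finType) (F G : T -> T -> T -> T -> int) :
  S4 (fun s t u v => F s t u v + G s t u v) = S4 F + S4 G.
Proof.
rewrite /S4 -big_split; apply: eq_bigr => s _; rewrite -big_split.
apply: eq_bigr => t _; rewrite -big_split; apply: eq_bigr => u _.
by rewrite -big_split.
Qed.

Lemma S4_uv (T : finType) (F : T -> T -> T -> T -> int) :
  S4 F = S4 (fun s t u v => F s t v u).
Proof. by apply: eq_bigr => s _; apply: eq_bigr => t _; exact: exchange_big. Qed.

Lemma S4_st (T : finType) (F : T -> T -> T -> T -> int) :
  S4 F = S4 (fun s t u v => F t s u v).
Proof. by rewrite /S4 exchange_big. Qed.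

Lemma S4_pair (T : finType) (F : T -> T -> T -> T -> int) :
  S4 F = S4 (fun s t u v => F u v s t).
Proof.
rewrite /S4.
transitivity (\sum_s \sum_u \sum_t \sum_v F s t u v).
  by apply: eq_bigr => s _; exact: exchange_big.
transitivity (\sum_s \sum_u \sum_v \sum_t F s t u v).
  by apply: eq_bigr => s _; apply: eq_bigr => u _; exact: exchange_big.
transitivity (\sum_u \sum_s \sum_v \sum_t F s t u v).
  exact: exchange_big.
by apply: eq_bigr => u _; exact: exchange_big.
Qed.

Lemma Dz_uv (T : finType) (g : rel T) (gsym : symmetric g) s t u v :
  Dz g s t v u = Dz g s t u v.
Proof.
rewrite /Dz (gsym v u); congr b2z.
by case: (g s t); case: (g u v); case: (s == u); case: (s == v); case: (t == u); case: (t == v).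
Qed.

Lemma Dz_st (T : finType) (g : rel T) (gsym : symmetric g) s t u v :
  Dz g t s u v = Dz g s t u v.
Proof.
rewrite /Dz (gsym t s); congr b2z.
by case: (g s t); case: (g u v); case: (s == u); case: (s == v); case: (t == u); case: (t == v).
Qed.

Lemma Dz_pair (T : finType) (g : rel T) s t u v :
  Dz g u v s t = Dz g s t u v.
Proof.
rewrite /Dz (eq_sym u s) (eq_sym u t) (eq_sym v s) (eq_sym v t); congr b2z.
by case: (g s t); case: (g u v); case: (s == u); case: (s == v); case: (t == u); case: (t == v).
Qed.

Lemma sum2 (T : finType) (a b : T) (F : T -> int) :
  a != b -> \sum_(x in [set a; b]) F x = F a + F b.
Proof.
by move=> ab; rewrite (big_setU1 a) /= ?big_set1 // inE.
Qed.

Lemma remL (T : finType) (a b : T) : a != b -> [set a; b] :\ a = [set b].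
Proof.
move=> ab; apply/setP => x; rewrite !inE.
by case: (eqVneq x a) => [->|xa] /=; rewrite ?(negbTE ab).
Qed.

Lemma remR (T : finType) (a b : T) : a != b -> [set a; b] :\ b = [set a].
Proof. by move=> ab; rewrite setUC remL // eq_sym. Qed.

Lemma disj2 (T : finType) (s t u v : T) :
  [disjoint [set s; t] & [set u; v]] = [&& s != u, s != v, t != u & t != v].
Proof.
apply/idP/idP.
  move=> H.
  apply/and4P; split; apply/eqP => E.
  - by have := disjointFr H (set21 s t); rewrite E set21.
  - by have := disjointFr H (set21 s t); rewrite E set22.
  - by have := disjointFr H (set22 s t); rewrite E set21.
  - by have := disjointFr H (set22 s t); rewrite E set22.
case/and4P => su sv tu tv; apply/pred0P => x /=; rewrite !inE.
have [->|_] := eqVneq x s; first by rewrite (negbTE su) (negbTE sv).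
have [->|_] := eqVneq x t; first by rewrite (negbTE tu) (negbTE tv).
by [].
Qed.

Lemma term4 (T : finType) (g : rel T) (s t u v : T) : s != t -> u != v ->
  term g [set s; t] [set u; v] =
    adj g s u * (deg g t + deg g v) + adj g s v * (deg g t + deg g u)
  + adj g t u * (deg g s + deg g v) + adj g t v * (deg g s + deg g u).
Proof.
move=> st uv; rewrite /term sum2 // !sum2 // remL // remR // remL // remR // !big_set1.
ring.
Qed.

Lemma pairsum (T : finType) (g : rel T) (H : T * T -> int) :
  \sum_(p : T * T | g p.1 p.2) H p = \sum_s \sum_t (if g s t then H (s, t) else 0).
Proof.
transitivity (\sum_s \sum_(t | g s t) H (s, t)).
  by rewrite pair_big_dep; apply: eq_bigr => -[].
by apply: eq_bigr => s _; rewrite big_mkcond.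
Qed.

Lemma adjC (T : finType) (g : rel T) (gsym : symmetric g) x y : adj g x y = adj g y x.
Proof. by rewrite /adj gsym. Qed.

Lemma L3 (T : finType) (g : rel T) (gsym : symmetric g) (girr : irreflexive g) :
  8 * Lambda1 g = S4 (fun s t u v => Dz g s t u v * term g [set s; t] [set u; v]).
Proof.
have -> : (8 : int) = 2 * (2 * 2) by [].
rewrite -!mulrA (@L2 _ _ gsym) (@dbl _ _ gsym girr (fun e1 => \sum_(e2 in edges g | [disjoint e1 & e2]) term g e1 e2)) mulr_sumr.
transitivity (\sum_(p : T * T | g p.1 p.2) \sum_(q : T * T | g q.1 q.2)
   (if [disjoint [set p.1; p.2] & [set q.1; q.2]] then term g [set p.1; p.2] [set q.1; q.2] else 0)).
  by apply: eq_bigr => p _; rewrite big_mkcondr (@dbl _ _ gsym girr).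
rewrite pairsum; apply: eq_bigr => s _; apply: eq_bigr => t _.
case: ifP => gst; last first.
  by symmetry; apply: big1 => u _; apply: big1 => v _; rewrite /Dz gst b2zE mul0r.
rewrite pairsum; apply: eq_bigr => u _; apply: eq_bigr => v _.
rewrite /= disj2 /Dz gst b2zE /=.
case: (g u v); rewrite /= ?mul0r //.
by case: ifP => _; rewrite ?mul1r ?mul0r.
Qed.

Lemma L4 (T : finType) (g : rel T) (gsym : symmetric g) (girr : irreflexive g) :
  S4 (fun s t u v => Dz g s t u v * term g [set s; t] [set u; v]) = 8 * Zs g.
Proof.
rewrite (@S4_ext _ _ (fun s t u v =>
   Dz g s t u v * adj g s u * deg g t + Dz g s t u v * adj g s u * deg g v
 + Dz g s t u v * adj g s v * deg g t + Dz g s t u v * adj g s v * deg g u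
 + Dz g s t u v * adj g t u * deg g s + Dz g s t u v * adj g t u * deg g v
 + Dz g s t u v * adj g t v * deg g s + Dz g s t u v * adj g t v * deg g u)); last first.
  move=> s t u v; rewrite /Dz b2zE.
  case: ifP => H; last by ring.
  case/andP: H => gst /andP[guv _].
  have st : s != t by apply/eqP => E; move: gst; rewrite E girr.
  have uv : u != v by apply/eqP => E; move: guv; rewrite E girr.
  by rewrite term4 //; ring.
rewrite !S4D.
have -> : S4 (fun s t u v => Dz g s t u v * adj g s u * deg g v) = Zs g.
  by rewrite S4_pair; apply: S4_ext => s t u v; rewrite Dz_pair (@adjC _ _ gsym u).
have -> : S4 (fun s t u v => Dz g s t u v * adj g s v * deg g t) = Zs g.
  by rewrite S4_uv; apply: S4_ext => s t u v; rewrite (@Dz_uv _ _ gsym).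
have -> : S4 (fun s t u v => Dz g s t u v * adj g s v * deg g u) = Zs g.
  rewrite S4_uv S4_pair; apply: S4_ext => s t u v /=.
  by rewrite (@Dz_uv _ _ gsym) Dz_pair (@adjC _ _ gsym u).
have -> : S4 (fun s t u v => Dz g s t u v * adj g t u * deg g s) = Zs g.
  by rewrite S4_st; apply: S4_ext => s t u v; rewrite (@Dz_st _ _ gsym).
have -> : S4 (fun s t u v => Dz g s t u v * adj g t u * deg g v) = Zs g.
  rewrite S4_st S4_pair; apply: S4_ext => s t u v /=.
  by rewrite Dz_pair (@Dz_uv _ _ gsym) (@adjC _ _ gsym u).
have -> : S4 (fun s t u v => Dz g s t u v * adj g t v * deg g s) = Zs g.
  rewrite S4_st S4_uv; apply: S4_ext => s t u v /=.
  by rewrite (@Dz_uv _ _ gsym) (@Dz_st _ _ gsym).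
have -> : S4 (fun s t u v => Dz g s t u v * adj g t v * deg g u) = Zs g.
  rewrite S4_st S4_uv S4_pair; apply: S4_ext => s t u v /=.
  by rewrite Dz_pair (@Dz_uv _ _ gsym) (@Dz_st _ _ gsym) (@adjC _ _ gsym u).
rewrite -/(Zs g).
ring.
Qed.

Theorem proposition14 (T : finType) (g : rel T)
  (gsym : symmetric g) (girr : irreflexive g) :
  Lambda1 g = Lambda1_rhs g.
Proof.
rewrite (@rhs_Z _ _ gsym girr).
apply: (mulfI (_ : (8 : int) != 0)) => //.
by rewrite (@L3 _ _ gsym girr) (@L4 _ _ gsym girr).
Qed.
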